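(* Let $E$ be a finite-dimensional real vector space and $\omega_0,\omega_1$ two symplectic forms on $E$. Then the space of complex structures $J$ on $E$ that are tamed by both $\omega_0$ and $\omega_1$ is either empty or contractible.
   Context: A complex structure $J$ ($J^2=-\mathrm{id}$) on $E$ is tamed by a symplectic form $\omega$ if $\omega(v,Jv)>0$ for every nonzero $v\in E$. *)

(* Defs.v *)
From HB Require Import structures.
From mathcomp Require Import all_boot all_order all_algebra.
From mathcomp Require Import all_classical all_reals.
From mathcomp Require Import topology normedtype.
Import numFieldNormedType.Exports.
Set Implicit Arguments. Unset Strict Implicit. Unset Printing Implicit Defensive.
Import Order.TTheory GRing.Theory Num.Theory.
Local Open Scope classical_set_scope.
Local Open Scope ring_scope.

(* E = R^n, vectors are row vectors 'rV[R]_n; a linear endomorphism is a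
   matrix J acting by v |-> v *m J; a bilinear form is a matrix W with
   omega(u, v) = u *m W *m v^T. *)

Definition bform (R : realType) (n : nat) (W : 'M[R]_n) (u v : 'rV[R]_n) : R :=
  (u *m W *m v^T) 0 0.

Definition symplectic (R : realType) (n : nat) (W : 'M[R]_n) : Prop :=
  W^T = - W /\ W \in unitmx.

Definition complex_structure (R : realType) (n : nat) (J : 'M[R]_n) : Prop :=
  J *m J = - 1%:M.

Definition tamed (R : realType) (n : nat) (W J : 'M[R]_n) : Prop :=
  forall v : 'rV[R]_n, v != 0 -> 0 < bform W v (v *m J).

Definition contractible (R : realType) (T : topologicalType) (A : set T) : Prop :=
  exists x0 : T, A x0 /\
  exists H : R * T -> T,
    {within `[(0:R), 1]%classic `*` A, continuous H} /\
    (forall t x, `[(0:R), 1]%classic t -> A x -> A (H (t, x))) /\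
    (forall x, A x -> H (0, x) = x /\ H (1, x) = x0).

(* Main.v *)
Require Import Defs.
From HB Require Import structures.
From mathcomp Require Import all_boot all_order all_algebra.
From mathcomp Require Import all_classical all_reals.
From mathcomp Require Import topology normedtype.
From mathcomp Require Import fingroup perm.
From mathcomp Require Import ring lra.
Import numFieldNormedType.Exports.
Import Order.TTheory GRing.Theory Num.Theory.
Local Open Scope classical_set_scope.
Local Open Scope ring_scope.

Set Implicit Arguments. Unset Strict Implicit. Unset Printing Implicit Defensive.

Section Cont.
Variables (R : realType) (T : topologicalType) (x : T).

Definition mcont k l (f : T -> 'M[R]_(k,l)) :=
  forall i j, {for x, continuous (fun y => f y i j)}.

Lemma mcont_cont k l (f : T -> 'M[R]_(k,l)) : mcont f -> {for x, continuous f}.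
Proof.
move=> fc; apply/cvg_mx_entourageP => A entA.
have H : forall i j, \forall y \near x, (f x i j, f y i j) \in A.
  move=> i j; have := fc i j; move/cvg_entourageP => /(_ A entA).
  move=> h; near=> y; rewrite in_setE; by near: y.
have H2 : \forall y \near x, forall i j, (f x i j, f y i j) \in A.
  apply: (@filter_forall _ _ (fun i y => forall j, (f x i j, f y i j) \in A)) => i.
  exact: (@filter_forall _ _ (fun j y => (f x i j, f y i j) \in A) _ _ (H i)).
exact: H2.
Unshelve. all: by end_near.
Qed.

Lemma scont_sum (I : Type) (r : seq I) (P : pred I) (F : I -> T -> R) :
  (forall i, P i -> {for x, continuous (F i)}) ->
  {for x, continuous (fun y => \sum_(i <- r | P i) F i y)}.
Proof.
move=> Fc; elim: r => [|a r IH].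
  have -> : (fun y => \sum_(i <- [::] | P i) F i y) = fun _ => 0.
    by apply/funext => y; rewrite big_nil.
  exact: cvg_cst.
have -> : (fun y => \sum_(i <- a :: r | P i) F i y) =
   fun y => (if P a then F a y else 0) + \sum_(i <- r | P i) F i y.
  by apply/funext => y; rewrite big_cons; case: (P a); rewrite ?add0r.
case: (boolP (P a)) => Pa.
  exact: (continuousD (Fc a Pa) IH).
apply: continuousD => //; exact: cvg_cst.
Qed.

Lemma scont_prod (I : Type) (r : seq I) (P : pred I) (F : I -> T -> R) :
  (forall i, P i -> {for x, continuous (F i)}) ->
  {for x, continuous (fun y => \prod_(i <- r | P i) F i y)}.
Proof.
move=> Fc; elim: r => [|a r IH].
  have -> : (fun y => \prod_(i <- [::] | P i) F i y) = fun _ => 1.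
    by apply/funext => y; rewrite big_nil.
  exact: cvg_cst.
have -> : (fun y => \prod_(i <- a :: r | P i) F i y) =
   fun y => (if P a then F a y else 1) * \prod_(i <- r | P i) F i y.
  by apply/funext => y; rewrite big_cons; case: (P a); rewrite ?mul1r.
case: (boolP (P a)) => Pa.
  exact: (continuousM (Fc a Pa) IH).
apply: continuousM => //; exact: cvg_cst.
Qed.

Lemma mc_cst k l (M : 'M[R]_(k,l)) : mcont (fun _ => M).
Proof. move=> i j; exact: cvg_cst. Qed.

Lemma mc_add k l (f g : T -> 'M[R]_(k,l)) : mcont f -> mcont g ->
  mcont (fun y => f y + g y).
Proof.
move=> fc gc i j.
have -> : (fun y => (f y + g y) i j) = (fun y => f y i j + g y i j).
  by apply/funext => y; rewrite mxE.
exact: continuousD.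
Qed.

Lemma mc_opp k l (f : T -> 'M[R]_(k,l)) : mcont f -> mcont (fun y => - f y).
Proof.
move=> fc i j.
have -> : (fun y => (- f y) i j) = (fun y => - f y i j).
  by apply/funext => y; rewrite mxE.
exact: continuousN.
Qed.

Lemma mc_scale k l (s : T -> R) (f : T -> 'M[R]_(k,l)) :
  {for x, continuous s} -> mcont f -> mcont (fun y => s y *: f y).
Proof.
move=> sc fc i j.
have -> : (fun y => (s y *: f y) i j) = (fun y => s y * f y i j).
  by apply/funext => y; rewrite mxE.
exact: continuousM.
Qed.

Lemma mc_mul k l m (f : T -> 'M[R]_(k,l)) (g : T -> 'M[R]_(l,m)) :
  mcont f -> mcont g -> mcont (fun y => f y *m g y).
Proof.
move=> fc gc i j.
have -> : (fun y => (f y *m g y) i j) = (fun y => \sum_a f y i a * g y a j).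
  by apply/funext => y; rewrite mxE.
apply: scont_sum => a _; exact: continuousM.
Qed.

Lemma sc_det k (f : T -> 'M[R]_k) : mcont f ->
  {for x, continuous (fun y => \det (f y))}.
Proof.
move=> fc.
have -> : (fun y => \det (f y)) =
  (fun y => \sum_(s : 'S_k) (-1) ^+ s * \prod_i f y i (s i)) by [].
apply: scont_sum => s _; apply: continuousM; first exact: cvg_cst.
apply: scont_prod => i _; exact: fc.
Qed.

Lemma mc_adj k (f : T -> 'M[R]_k) : mcont f -> mcont (fun y => \adj (f y)).
Proof.
move=> fc i j.
have -> : (fun y => (\adj (f y)) i j) = (fun y =>
   (-1) ^+ (j + i) * \det (row' j (col' i (f y)))).
  by apply/funext => y; rewrite mxE.
apply: continuousM; first exact: cvg_cst.
apply: sc_det => a b.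
have -> : (fun y => row' j (col' i (f y)) a b) = (fun y => f y (lift j a) (lift i b)).
  by apply/funext => y; rewrite !mxE.
exact: fc.
Qed.

Lemma mc_minv k (f : T -> 'M[R]_k) : mcont f -> \det (f x) != 0 ->
  mcont (fun y => (\det (f y))^-1 *: \adj (f y)).
Proof.
move=> fc d; apply: mc_scale; last exact: mc_adj.
apply: continuousV => //; exact: sc_det.
Qed.

End Cont.

Section Alg.
Variables (R : realType) (n : nat).
Implicit Types (A W J : 'M[R]_n) (u v w x y z : 'rV[R]_n).

Definition minv A := (\det A)^-1 *: \adj A.

Lemma minvE A : \det A != 0 -> minv A = invmx A.
Proof. by move=> h; rewrite /invmx unitmxE unitfE h. Qed.

Lemma mulVm A : \det A != 0 -> minv A *m A = 1%:M.
Proof. by move=> h; rewrite minvE // mulVmx // unitmxE unitfE. Qed.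

Lemma mulmV A : \det A != 0 -> A *m minv A = 1%:M.
Proof. by move=> h; rewrite minvE // mulmxV // unitmxE unitfE. Qed.

Lemma minv1 : minv 1%:M = 1%:M.
Proof. by rewrite /minv det1 adj1 invr1 scale1r. Qed.

Lemma bform0l W v : bform W 0 v = 0.
Proof. by rewrite /bform !mul0mx mxE. Qed.

Lemma bformNr W u v : bform W u (- v) = - bform W u v.
Proof. by rewrite /bform linearN /= mulmxN mxE. Qed.

Lemma bform_exp W x y z u s :
  bform W (x - s *: y) (z + s *: u) =
  bform W x z + s * bform W x u - s * bform W y z - s ^+ 2 * bform W y u.
Proof.
rewrite /bform mulmxBl -scalemxAl mulmxBl -scalemxAl.
rewrite [(z + _)^T]linearD /=.
have trZ : (s *: u)^T = s *: u^T by apply/matrixP => i j; rewrite !mxE.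
rewrite trZ !mulmxDr -!scalemxAr !mxE /=; lra.
Qed.


Lemma detK W J J0 : tamed W J -> tamed W J0 -> \det (J + J0) != 0.
Proof.
move=> tJ tJ0; apply/negP => /det0P [w wn0 wK].
have e : w *m J = - (w *m J0).
  by apply/eqP; rewrite -addr_eq0 -mulmxDr wK.
have := tJ w wn0; have := tJ0 w wn0; rewrite e bformNr; lra.
Qed.

Section Core.
Variables (J J0 : 'M[R]_n).
Hypotheses (cJ : complex_structure J) (cJ0 : complex_structure J0).
Hypothesis dK : \det (J + J0) != 0.
Let K := J + J0.
Definition Ymx := (J - J0) *m minv (J + J0).

Lemma KJ0 : K *m J0 = J *m K.
Proof.
rewrite /K mulmxDl mulmxDr cJ0 cJ; rewrite addrC; done.
Qed.

Lemma J0K : J0 *m K = K *m J.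
Proof.
by rewrite /K mulmxDl mulmxDr cJ0 cJ addrC.
Qed.

Lemma minvK_J : minv K *m J = J0 *m minv K.
Proof.
have h := mulVm dK; have h' := mulmV dK.
rewrite -[LHS]mulmx1 -h' !mulmxA -[minv K *m J *m K]mulmxA -KJ0.
by rewrite mulmxA h mul1mx.
Qed.

Lemma J_minvK : J *m minv K = minv K *m J0.
Proof.
have h := mulVm dK; have h' := mulmV dK.
rewrite -[LHS]mul1mx -h -!mulmxA [K *m (J *m _)]mulmxA -J0K.
by rewrite -mulmxA h' mulmx1.
Qed.

Lemma Y_anti : J0 *m Ymx = - (Ymx *m J0).
Proof.
rewrite /Ymx -/K mulmxA -(mulmxA (J - J0)) -J_minvK mulmxA -mulNmx.
congr (_ *m _).
rewrite mulmxBr mulmxBl cJ0 cJ opprB.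
apply/matrixP => i j; rewrite !mxE; lra.
Qed.

Lemma YK : Ymx *m K = J - J0.
Proof. by rewrite /Ymx -/K -mulmxA mulVm // mulmx1. Qed.

Lemma P1J : (1%:M - Ymx) *m J = J0 *m (1%:M - Ymx).
Proof.
rewrite mulmxBl mulmxBr mul1mx mulmx1 Y_anti.
have e : Ymx *m J = (J - J0) - Ymx *m J0.
  by rewrite -YK /K mulmxDr addrK.
rewrite e; apply/matrixP => i j; rewrite !mxE; lra.
Qed.

Lemma P1_inj w : w *m (1%:M - Ymx) = 0 -> w = 0.
Proof.
move=> h.
have e1 : w = w *m Ymx.
  by apply/eqP; rewrite -subr_eq0 -[w in w - _]mulmx1 -mulmxBr h.
have e2 : w *m K = w *m (J - J0) by rewrite {1}e1 -mulmxA YK.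
have e3 : w *m J0 = 0.
  move: e2; rewrite /K mulmxDr mulmxBr => /eqP; rewrite -subr_eq0.
  move=> /eqP e; apply/matrixP => i j.
  have := congr1 (fun M : 'rV[R]_n => M i j) e; rewrite !mxE => ?. 
  lra.
have : w *m J0 *m J0 = 0 by rewrite e3 mul0mx.
by rewrite -mulmxA cJ0 mulmxN mulmx1 => /eqP; rewrite oppr_eq0 => /eqP.
Qed.

Definition Pmx (s : R) := 1%:M - s *: Ymx.

Lemma ePs s w : w *m Pmx s = w - s *: (w *m Ymx).
Proof. by rewrite /Pmx mulmxBr mulmx1 -scalemxAr. Qed.

Lemma eJ0Ps s w : w *m J0 *m Pmx s = w *m J0 + s *: (w *m Ymx *m J0).
Proof.
rewrite /Pmx mulmxBr mulmx1 -scalemxAr -(mulmxA w J0 Ymx) Y_anti mulmxN scalerN opprK.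
by rewrite mulmxA.
Qed.

Lemma pos_P W s w : tamed W J -> tamed W J0 -> 0 <= s <= 1 -> w != 0 ->
  0 < bform W (w *m Pmx s) (w *m J0 *m Pmx s).
Proof.
move=> tJ tJ0 /andP[s0 s1] wn0.
rewrite ePs eJ0Ps bform_exp.
have a := tJ0 w wn0.
have c : 0 <= bform W (w *m Ymx) (w *m Ymx *m J0).
  have [->|ne] := eqVneq (w *m Ymx) 0; first by rewrite bform0l.
  exact/ltW/tJ0.
have q1 : 0 < bform W (w *m Pmx 1) (w *m J0 *m Pmx 1).
  have un0 : w *m Pmx 1 != 0.
    apply: contra wn0 => /eqP h; apply/eqP; apply: P1_inj; by rewrite -h /Pmx scale1r.
  have := tJ _ un0; congr (0 < bform W _ _).
  by rewrite -mulmxA /Pmx scale1r P1J mulmxA.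
move: q1; rewrite ePs eJ0Ps bform_exp expr1n !mul1r => q1.
set A := bform W w (w *m J0) in a q1 *.
set B1 := bform W w (w *m Ymx *m J0) in q1 *.
set B2 := bform W (w *m Ymx) (w *m J0) in q1 *.
set C := bform W (w *m Ymx) (w *m Ymx *m J0) in c q1 *.
have e : A + s * B1 - s * B2 - s ^+ 2 * C =
  (1 - s) * A + s * (A + B1 - B2 - C) + s * (1 - s) * C by ring.
rewrite e.
have h1 : 0 <= (1 - s) * A by apply: mulr_ge0; lra.
have h2 : 0 <= s * (1 - s) * C by apply: mulr_ge0 => //; apply: mulr_ge0; lra.
have [s0'|sp] := eqVneq s 0.
  rewrite s0' !mul0r addr0 subr0 mul1r; lra.
have h3 : 0 < s * (A + B1 - B2 - C) by apply: mulr_gt0 => //; rewrite lt_neqAle eq_sym sp s0.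
lra.
Qed.

Definition Hmx (s : R) := minv (Pmx s) *m J0 *m Pmx s.

Lemma detP W s : tamed W J -> tamed W J0 -> 0 <= s <= 1 -> \det (Pmx s) != 0.
Proof.
move=> tJ tJ0 s01; apply/negP => /det0P [w wn0 wP].
by have := pos_P tJ tJ0 s01 wn0; rewrite wP bform0l ltxx.
Qed.

Lemma H_cs s : \det (Pmx s) != 0 -> complex_structure (Hmx s).
Proof.
move=> dP; rewrite /complex_structure /Hmx.
rewrite -!mulmxA [Pmx s *m (minv _ *m _)]mulmxA mulmV // mul1mx.
rewrite [J0 *m (J0 *m _)]mulmxA cJ0 mulNmx mul1mx mulmxN mulVm //.
Qed.

Lemma H_tamed W s : \det (Pmx s) != 0 -> 
  (forall w, w != 0 -> 0 < bform W (w *m Pmx s) (w *m J0 *m Pmx s)) ->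
  tamed W (Hmx s).
Proof.
move=> dP hp v vn0.
set w := v *m minv (Pmx s).
have ev : v = w *m Pmx s by rewrite /w -mulmxA mulVm // mulmx1.
have wn0 : w != 0.
  by apply: contra vn0 => /eqP w0; rewrite ev w0 mul0mx.
have := hp w wn0; congr (0 < bform W _ _); first by [].
by rewrite {1}ev /Hmx !mulmxA -(mulmxA w (Pmx s)) mulmV // mulmx1.
Qed.

Lemma H_0 : Hmx 0 = J0.
Proof. by rewrite /Hmx /Pmx scale0r subr0 minv1 mul1mx mulmx1. Qed.

Lemma H_1 : \det (Pmx 1) != 0 -> Hmx 1 = J.
Proof.
move=> dP; rewrite /Hmx -mulmxA.
have -> : J0 *m Pmx 1 = Pmx 1 *m J by rewrite /Pmx scale1r P1J.
by rewrite mulmxA mulVm // mul1mx.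
Qed.

End Core.
End Alg.

Unset Implicit Arguments.

Lemma mcont_H (R : realType) (n : nat) (J0 : 'M[R]_n) (p : R * 'M[R]_n) :
  \det (p.2 + J0) != 0 -> \det (Pmx p.2 J0 (1 - p.1)) != 0 ->
  mcont p (fun q : R * 'M[R]_n => Hmx q.2 J0 (1 - q.1)).
Proof.
move=> dK dP.
have c2 : mcont p (fun q : R * 'M[R]_n => q.2).
  move=> i j; apply: (continuous_comp (f := snd) (g := fun M : 'M[R]_n => M i j)).
    exact: cvg_snd.
  exact: coord_continuous.
have c1 : {for p, continuous (fun q : R * 'M[R]_n => 1 - q.1)}.
  apply: continuousB; first exact: cvg_cst.
  exact: cvg_fst.
have cK : mcont p (fun q : R * 'M[R]_n => q.2 + J0).
  by apply: mc_add => //; exact: mc_cst.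
have cP : mcont p (fun q : R * 'M[R]_n => Pmx q.2 J0 (1 - q.1)).
  rewrite /Pmx /Ymx; apply: mc_add; first exact: mc_cst.
  apply: mc_opp; apply: mc_scale => //.
  apply: mc_mul; first by apply: mc_add => //; apply: mc_opp; exact: mc_cst.
  exact: (mc_minv cK).
rewrite /Hmx; apply: mc_mul => //; apply: mc_mul; last exact: mc_cst.
exact: (mc_minv cP).
Qed.

Theorem proposition1p1 (R : realType) (n : nat) (W0 W1 : 'M[R]_n) :
  symplectic W0 -> symplectic W1 ->
  let S := [set J : 'M[R]_n | complex_structure J /\ tamed W0 J /\ tamed W1 J] in
  S = set0 \/ contractible R S.
Proof.
move=> _ _ S.
case: (pselect (exists J0, S J0)) => [[J0 SJ0]|nS]; last first.
  left; apply/seteqP; split => J //= SJ; exact: nS (ex_intro _ J SJ).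
right; exists J0; split => //.
case: SJ0 => cJ0 [t0J0 t1J0].
exists (fun p : R * 'M[R]_n => Hmx p.2 J0 (1 - p.1)).
have key : forall t J, `[(0:R), 1]%classic t -> S J ->
   [/\ \det (J + J0) != 0, \det (Pmx J J0 (1 - t)) != 0 &
       S (Hmx J J0 (1 - t))].
  move=> t J; rewrite /= in_itv /= => /andP[t0 t1] [cJ [t0J t1J]].
  have dK := detK t0J t0J0.
  have s01 : 0 <= 1 - t <= 1 by apply/andP; split; lra.
  have dP := detP cJ cJ0 dK t0J t0J0 s01.
  split => //; split; first exact: H_cs.
  split; apply: H_tamed => // w wn0.
    by have := @pos_P R n J J0 cJ cJ0 dK W0 (1 - t) w; apply.
  by have := @pos_P R n J J0 cJ cJ0 dK W1 (1 - t) w; apply.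
split.
  apply: continuous_in_subspaceT => -[t J]; rewrite in_setE => -[/= tin SJ].
  have [dK dP _] := key t J tin SJ.
  exact/mcont_cont/mcont_H.
split.
  by move=> t J tin SJ; have [_ _] := key t J tin SJ.
move=> J SJ; split.
  have tin : `[(0:R), 1]%classic 0 by rewrite /= in_itv /= lexx ler01.
  have [dK dP _] := key 0 J tin SJ.
  move: dP; rewrite /= subr0 => dP.
  case: SJ => cJ _.
  exact: H_1 cJ cJ0 dK dP.
by rewrite /= subrr H_0.
Qed.
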